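(* Let $g$ be a total recursive function such that, writing $\Phi_i(x,y)$ for the $i$-th $\Sigma^0_2$ formula, $\Phi_i(x,y)$ holds iff $W_{g(i,x,y)}$ is finite. Let $F(i,x,y,s)=\max_{y'\leq y}|W_{g(i,x,y'),s}|$ and $A_i=\{x:\forall y\ \lim_{s\to\infty}F(i,x,y,s)<\infty\}$. For every $i$ and $n$, let $B(i,n,y,s)=\min\{F(i,x,y,s):x\in B^n\}$. Then: if $A_i\cap B^n\neq\emptyset$, then for every $y$, $\lim_{s\to\infty}B(i,n,y,s)<\infty$; and if $A_i\cap B^n=\emptyset$, then there exists $y_0$ such that for all $y>y_0$, $\lim_{s\to\infty}B(i,n,y,s)=\infty$.
   Context: $W_e$ denotes the $e$-th recursively enumerable set and $W_{e,s}$ its enumeration up to stage $s$. For $x=\sum_{i=0}^{k}2^{n_i}\in\mathbb{Z}^+$ with $n_0<\cdots<n_k$, set $\mu(x)=n_k$. For each $n$, $B^n=\{x\in\mathbb{Z}^+:\mu(x)=n\}$ (a finite set). *)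

(* Defs.v *)
From mathcomp Require Import all_boot.
From mathcomp Require Import finmap.
Set Implicit Arguments. Unset Strict Implicit. Unset Printing Implicit Defensive.
Local Open Scope fset_scope.

(* mu x = n_k, the largest exponent in the binary expansion of x > 0,
   i.e. the largest n with 2^n <= x. *)
Definition mu (x : nat) : nat := trunc_log 2 x.

Definition inB (n x : nat) : bool := (0 < x) && (mu x == n).

Definition enumeration (Ws : nat -> nat -> {fset nat}) : Prop :=
  forall e s, Ws e s `<=` Ws e s.+1.

Definition Ffun (Ws : nat -> nat -> {fset nat}) (g : nat -> nat -> nat -> nat)
  (i x y s : nat) : nat :=
  \max_(y' < y.+1) #|` Ws (g i x y') s|.

Definition lim_finite (f : nat -> nat) : Prop :=
  exists L s0, forall s, s0 <= s -> f s = L.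

Definition lim_infty (f : nat -> nat) : Prop :=
  forall M, exists s0, forall s, s0 <= s -> M <= f s.

Definition Aset Ws g (i x : nat) : Prop :=
  forall y, lim_finite (fun s => Ffun Ws g i x y s).

(* B(i,n,y,s) = min { F(i,x,y,s) : x in B^n }  (B^n is nonempty: 2^n in B^n,
   and B^n is contained in [0, 2^(n+1))) *)
Definition Bfun Ws g (i n y s : nat) : nat :=
  \big[minn/Ffun Ws g i (2 ^ n) y s]_(0 <= x < 2 ^ n.+1 | inB n x) Ffun Ws g i x y s.

(* Main.v *)
Require Import Defs.
From mathcomp Require Import all_boot.
From mathcomp Require Import finmap.
From mathcomp Require Import zify.
From Stdlib Require Import Classical.


Definition mono (f : nat -> nat) := forall s s', s <= s' -> f s <= f s'.

Lemma bounded_mono_fin d (f : nat -> nat) : mono f ->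
  (forall s, f s <= d + f 0) -> lim_finite f.
Proof.
elim: d f => [|d IH] f mf hb.
  exists (f 0), 0 => s _; apply/eqP; rewrite eqn_leq hb /=; exact: mf.
destruct (classic (exists s, f 0 < f s)) as [[s hs]|hn].
  have hg : lim_finite (fun t => f (s + t)).
    apply: IH; first by move=> a b hab; apply: mf; rewrite leq_add2l.
    by move=> t; have := hb (s + t); rewrite addn0; lia.
  have [L [s0 H]] := hg.
  exists L, (s + s0) => t ht.
  have -> : t = s + (t - s) by lia.
  by apply: H; lia.
exists (f 0), 0 => s _; apply/eqP; rewrite eqn_leq; apply/andP; split; last exact: mf.
by rewrite leqNgt; apply/negP => h; apply: hn; exists s.
Qed.

Lemma mono_notfin_infty f : mono f -> ~ lim_finite f -> lim_infty f.
Proof.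
move=> mf nf M.
destruct (classic (exists s, M <= f s)) as [[s hs]|hn].
  by exists s => t ht; apply: leq_trans hs (mf _ _ ht).
exfalso; apply: nf; apply: (@bounded_mono_fin M) => // s.
have : ~ M <= f s by move=> h; apply: hn; exists s.
by move/negP; rewrite -ltnNge => h; lia.
Qed.

Lemma Ws_mono Ws (HW : enumeration Ws) e s s' : s <= s' -> (Ws e s `<=` Ws e s')%fset.
Proof.
move=> h; have -> : s' = s + (s' - s) by lia.
elim: (s' - s) => [|k IH]; first by rewrite addn0.
by rewrite addnS; apply: fsubset_trans IH (HW _ _).
Qed.

Lemma F_mono_s Ws g (HW : enumeration Ws) i x y : mono (fun s => Ffun Ws g i x y s).
Proof.
move=> s s' h; rewrite /Ffun.
apply: (big_ind2 (fun a b => a <= b)) => //.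
  by move=> a b c d h1 h2; lia.
by move=> j _; apply: fsubset_leq_card; apply: Ws_mono.
Qed.

Lemma F_mono_y Ws g i x y y' s : y <= y' -> Ffun Ws g i x y s <= Ffun Ws g i x y' s.
Proof.
move=> h; rewrite /Ffun; apply/bigmax_leqP => j _.
have hj : j < y'.+1 by have := ltn_ord j; lia.
have := @leq_bigmax _ (fun k : 'I_y'.+1 => #|` Ws (g i x k) s|) (Ordinal hj).
by [].
Qed.

Lemma bigmin_le (r : seq nat) d (P : pred nat) h x :
  x \in r -> P x -> \big[minn/d]_(j <- r | P j) h j <= h x.
Proof.
elim: r => [|a r IH] //; rewrite in_cons big_cons => /orP [/eqP <- | hr] Px.
  by rewrite Px geq_minl.
case: (P a); last exact: IH.
by apply: leq_trans (geq_minr _ _) (IH hr Px).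
Qed.

Lemma inB_lt n x : inB n x -> x < 2 ^ n.+1.
Proof.
by case/andP => _ /eqP <-; apply: trunc_log_ltn.
Qed.

Lemma inB_pow n : inB n (2 ^ n).
Proof. by rewrite /inB expn_gt0 /= /mu trunc_expnK. Qed.

Lemma B_mono Ws g (HW : enumeration Ws) i n y : mono (fun s => Bfun Ws g i n y s).
Proof.
move=> s s' h; rewrite /Bfun.
apply: (big_ind2 (fun a b => a <= b)); first exact: F_mono_s.
  by move=> a b c d h1 h2; lia.
by move=> j _; apply: F_mono_s.
Qed.

Theorem lemma3p5 (Ws : nat -> nat -> {fset nat}) (g : nat -> nat -> nat -> nat)
  (HW : enumeration Ws) (i n : nat) :
  ((exists x, inB n x /\ Aset Ws g i x) ->
     forall y, lim_finite (fun s => Bfun Ws g i n y s)) /\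
  ((forall x, inB n x -> ~ Aset Ws g i x) ->
     exists y0, forall y, y0 < y -> lim_infty (fun s => Bfun Ws g i n y s)).
Proof.
split.
  move=> [x [hx hA]] y.
  have [L [s0 H]] := hA y.
  apply: (@bounded_mono_fin L); first exact: B_mono.
  move=> s; apply: leq_trans (leq_addr _ _).
  have hle : Bfun Ws g i n y (maxn s s0) <= L.
    rewrite -(H (maxn s s0) (leq_maxr _ _)) /Bfun.
    apply: bigmin_le => //; rewrite mem_index_iota /=; exact: inB_lt.
  apply: leq_trans _ hle; exact: (B_mono _ _ HW i n y _ _ (leq_maxl s s0)).
move=> hna.
have hy : forall N, exists y0, forall x, x < N -> inB n x -> forall y, y0 < y ->
    lim_infty (fun s => Ffun Ws g i x y s).
  elim=> [|N [y0 IH]]; first by exists 0.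
  destruct (classic (inB n N)) as [hN|hN].
    have [yN hyN] := not_all_ex_not _ _ (hna N hN).
    exists (maxn y0 yN) => x hx hxB y hyy.
    rewrite ltnS leq_eqVlt in hx; case/orP: hx => [/eqP -> | hx].
      apply: mono_notfin_infty; first exact: F_mono_s.
      move=> [L [s0 H]].
      have [s1 H1] := @mono_notfin_infty _ (F_mono_s _ _ HW i N yN) hyN L.+1.
      have h1 := H1 (maxn s0 s1) (leq_maxr _ _).
      have h2 := H (maxn s0 s1) (leq_maxl _ _).
      have h3 : yN <= y by lia.
      have := @F_mono_y Ws g i N yN y (maxn s0 s1) h3.
      lia.
    by apply: IH => //; lia.
  exists y0 => x hx hxB y hyy; apply: IH => //.
  rewrite ltnS leq_eqVlt in hx; case/orP: hx => [/eqP hx | //].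
  by subst x.
have [y0 Hy0] := hy (2 ^ n.+1).
exists y0 => y hyy M.
have hs : forall N, exists s0, forall x, x < N -> inB n x -> forall s, s0 <= s ->
    M <= Ffun Ws g i x y s.
  elim=> [|N [s0 IH]]; first by exists 0.
  destruct (classic (inB n N)) as [hN|hN].
    have [s1 H1] := Hy0 N (inB_lt _ _ hN) hN y hyy M.
    exists (maxn s0 s1) => x hx hxB s hs.
    rewrite ltnS leq_eqVlt in hx; case/orP: hx => [/eqP -> | hx].
      by apply: H1; lia.
    by apply: IH => //; lia.
  exists s0 => x hx hxB s hs; apply: IH => //.
  rewrite ltnS leq_eqVlt in hx; case/orP: hx => [/eqP hx | //].
  by subst x.
have [s0 Hs0] := hs (2 ^ n.+1).
exists s0 => s hs0; rewrite /Bfun.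
apply: (big_ind (fun v => M <= v)).
- by apply: Hs0 => //; [apply: inB_lt | ]; apply: inB_pow.
- by move=> a b ha hb; rewrite leq_min ha hb.
- by move=> x hx; apply: Hs0 => //; apply: inB_lt.
Qed.
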